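(* Let $p$ be a prime. Let $G=P\times A$ and $H=P_1\times B$, where $P$ and $P_1$ are finite non-abelian $p$-groups and $A$, $B$ are non-trivial finite abelian groups of order coprime to $p$. Suppose that $\Gamma_G$ and $\Gamma_H$ are irregular and $\Gamma_G\cong\Gamma_H$. Then $|A|=|B|$ and $|P|=|P_1|$; in particular $|G|=|H|$.
   Context: For a non-abelian group $G$ with center $Z(G)$, the non-commuting graph $\Gamma_G$ is the simple graph with vertex set $G\setminus Z(G)$ in which two distinct vertices $x,y$ are adjacent if and only if $xy\neq yx$. A graph is regular if all its vertices have the same degree, and irregular otherwise. *)

(* Defs.v *)
From HB Require Import structures.
From mathcomp Require Import all_boot all_order all_fingroup all_solvable.
Set Implicit Arguments. Unset Strict Implicit. Unset Printing Implicit Defensive.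
Import GroupScope.

Definition nc_vert (gT : finGroupType) (G : {group gT}) : {set gT} :=
  G :\: 'Z(G).

Definition nc_adj (gT : finGroupType) (G : {group gT}) (x y : gT) : bool :=
  [&& x \in nc_vert G, y \in nc_vert G, x != y & x * y != y * x].

Definition nc_deg (gT : finGroupType) (G : {group gT}) (x : gT) : nat :=
  #|[set y in nc_vert G | nc_adj G x y]|.

Definition nc_irregular (gT : finGroupType) (G : {group gT}) : Prop :=
  exists x y, [/\ x \in nc_vert G, y \in nc_vert G & nc_deg G x != nc_deg G y].

Definition nc_isomorphic (gT hT : finGroupType) (G : {group gT}) (H : {group hT})
  : Prop :=
  exists f : gT -> hT,
    [/\ {in nc_vert G &, injective f},
        f @: nc_vert G = nc_vert H &
        {in nc_vert G &, forall x y, nc_adj G x y = nc_adj H (f x) (f y)}].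

(* Main.v *)
Require Import Defs.
From HB Require Import structures.
From mathcomp Require Import all_boot all_order all_fingroup all_solvable.
From mathcomp Require Import zify.
Import GroupScope.

Section Helpers.
Local Set Implicit Arguments.
Local Unset Strict Implicit.
Local Open Scope nat_scope.
Lemma pdiff p z c : z < c -> p ^ c - p ^ z = p ^ z * (p ^ (c - z) - 1).
Proof. move=> zc; by rewrite mulnBr muln1 -expnD subnKC // ltnW. Qed.

Lemma cop_pk1 p k : prime p -> 0 < k -> coprime p (p ^ k - 1).
Proof.
move=> pp k0; rewrite -(coprime_pexpl _ _ k0).
have h : (p ^ k - 1).+1 = p ^ k by rewrite subn1 prednK // expn_gt0 prime_gt0.
by rewrite -{1}h coprimeSn.
Qed.

Lemma logn_form p a z c : prime p -> coprime a p -> 0 < a -> z < c ->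
  logn p (a * (p ^ c - p ^ z)) = z.
Proof.
move=> pp ap a0 zc; rewrite pdiff // mulnCA.
have k0 : 0 < c - z by rewrite subn_gt0.
have pos : 0 < p ^ (c - z) - 1.
  by rewrite subn_gt0 -(expn0 p) ltn_exp2l ?prime_gt1.
have pp0 : 0 < p ^ z by rewrite expn_gt0 prime_gt0.
rewrite lognM // ?muln_gt0 ?a0 ?pos // pfactorK // lognM //.
have ca : coprime p a by rewrite coprime_sym.
by rewrite (logn_coprime (cop_pk1 pp k0)) (logn_coprime ca) !addn0.
Qed.

Lemma arith p a b z c n z' c' n' : prime p -> coprime a p -> coprime b p ->
  0 < a -> 0 < b -> z < c -> c < n -> z' < c' -> c' < n' ->
  a * (p ^ c - p ^ z) = b * (p ^ c' - p ^ z') ->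
  a * (p ^ n - p ^ c) = b * (p ^ n' - p ^ c') ->
  a = b /\ p ^ n = p ^ n'.
Proof.
move=> pp ap bp a0 b0 zc cn zc' cn' e1 e2.
have ez : z = z' by rewrite -(logn_form pp ap a0 zc) e1 logn_form.
have ec : c = c' by rewrite -(logn_form pp ap a0 cn) e2 logn_form.
subst z' c'.
have pos : 0 < p ^ c - p ^ z by rewrite subn_gt0 ltn_exp2l ?prime_gt1.
have eab : a = b by apply/eqP; rewrite -(eqn_pmul2r pos) e1.
subst b; split => //.
have h1 : p ^ c < p ^ n by rewrite ltn_exp2l ?prime_gt1.
have h2 : p ^ c < p ^ n' by rewrite ltn_exp2l ?prime_gt1.
have e3 : p ^ n - p ^ c = p ^ n' - p ^ c by apply/eqP; rewrite -(eqn_pmul2l a0) e2.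
lia.
Qed.
Local Open Scope group_scope.
Lemma deg_card (gT : finGroupType) (G : {group gT}) x :
  x \in nc_vert G -> nc_deg G x = #|G| - #|'C_G[x]|.
Proof.
move=> xV; have xG : x \in G by move: xV; rewrite inE => /andP[].
rewrite /nc_deg.
have -> : [set y in nc_vert G | nc_adj G x y] = G :\: 'C_G[x].
  apply/setP => y; rewrite in_set /nc_adj xV in_setD in_setI /nc_vert in_setD !in_setI cent1E.
  case yG: (y \in G); rewrite ?andbF ?andbT //=.
  have [e|ne] := eqVneq (y * x) (x * y); first by rewrite !andbF.
  have nC : y \notin 'C(G).
    apply/negP => /centP /(_ x xG) c; by rewrite c eqxx in ne.
  have nxy : x != y by apply/eqP => e; rewrite e eqxx in ne.
  by rewrite nC nxy.
by rewrite cardsD (setIidPr (subsetIl _ _)).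
Qed.

Lemma vert_card (gT : finGroupType) (G : {group gT}) :
  #|nc_vert G| = #|G| - #|'Z(G)|.
Proof. by rewrite /nc_vert cardsD (setIidPr (center_sub G)). Qed.

Lemma center_card (gT : finGroupType) (G P A : {group gT}) :
  P \x A = G -> abelian A -> #|'Z(G)| = (#|'Z(P)| * #|A|)%N.
Proof.
move=> defG abA; have := center_dprod defG.
by rewrite (center_idP abA) => /dprod_card.
Qed.

Lemma cent_struct (gT : finGroupType) (G P A : {group gT}) x :
  P \x A = G -> abelian A -> x \in nc_vert G ->
  exists u, [/\ u \in P, u \notin 'Z(P) & #|'C_G[x]| = (#|'C_P[u]| * #|A|)%N].
Proof.
move=> defG abA xV.
have [_ PA cAP tI] := dprodP defG.
have defZ := center_dprod defG; rewrite (center_idP abA) in defZ.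
have AZ : A \subset 'Z(G) by rewrite -(dprodW defZ) mulG_subr.
have cen : forall c z, c \in A -> z \in G -> commute z c.
  move=> c z cA zG; have := subsetP AZ c cA => /centerP [_ /(_ z zG)].
  exact: commute_sym.
have PG : P \subset G by rewrite -PA mulG_subl.
have AG : A \subset G by rewrite -PA mulG_subr.
move: xV; rewrite /nc_vert in_setD => /andP [xZ xG].
have [u [a [uP aA xE _]]] := mem_dprod defG xG.
exists u; split => //.
  apply/negP => uZ; move/negP: xZ; apply; rewrite xE -(dprodW defZ).
  exact: mem_mulg.
have -> : 'C_G[x] = 'C_P[u] * A.
  apply/setP => y; apply/idP/idP.
    rewrite in_setI => /andP [yG /cent1P cyx].
    have [v [b [vP bA yE _]]] := mem_dprod defG yG.
    rewrite yE; apply: mem_mulg => //.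
    rewrite in_setI vP; apply/cent1P.
    have -> : v = y * b^-1 by rewrite yE mulgK.
    have -> : u = x * a^-1 by rewrite xE mulgK.
    have bG : b^-1 \in G by rewrite groupV; apply: (subsetP AG).
    have aG : a^-1 \in G by rewrite groupV; apply: (subsetP AG).
    have aAi : a^-1 \in A by rewrite groupV.
    have bAi : b^-1 \in A by rewrite groupV.
    apply: commuteM.
      apply: commute_sym; apply: commuteM; first exact: commute_sym.
      exact: cen.
    apply: commute_sym; apply: commuteM; first exact: commute_sym (cen _ _ aAi yG).
    exact: cen _ _ bAi aG.
  case/mulsgP => v b /setIP [vP /cent1P cvu] bA ->.
  rewrite in_setI; apply/andP; split.
    by rewrite -PA; apply: mem_mulg.
  apply/cent1P; rewrite xE.
  have uG : u \in G by apply: (subsetP PG).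
  have vG : v \in G by apply: (subsetP PG).
  have aG : a \in G by apply: (subsetP AG).
  apply: commuteM.
    apply: commute_sym; apply: commuteM; first exact: commute_sym.
    exact: cen.
  exact: cen _ _ aA (groupM vG (subsetP AG b bA)).
rewrite TI_cardMg //; apply/trivgP; rewrite -tI; apply: setSI; exact: subsetIl.
Qed.

Lemma iso_facts (gT hT : finGroupType) (G : {group gT}) (H : {group hT}) (f : gT -> hT) :
  {in nc_vert G &, injective f} -> f @: nc_vert G = nc_vert H ->
  {in nc_vert G &, forall x y, nc_adj G x y = nc_adj H (f x) (f y)} ->
  #|nc_vert H| = #|nc_vert G| /\
  forall x, x \in nc_vert G -> nc_deg H (f x) = nc_deg G x.
Proof.
move=> inj im adj; split; first by rewrite -im card_in_imset.
move=> x xV; rewrite /nc_deg.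
have -> : [set y in nc_vert H | nc_adj H (f x) y] =
          f @: [set y in nc_vert G | nc_adj G x y].
  apply/setP => y'; apply/idP/idP.
    rewrite inE => /andP [].
    rewrite -{1}im => /imsetP [y yV ->] ad.
    by apply: imset_f; rewrite inE yV adj.
  case/imsetP => y; rewrite inE => /andP [yV ad] ->.
  by rewrite inE -im imset_f //= -adj.
rewrite card_in_imset //; apply: sub_in2 inj => y; rewrite inE => /andP [].
by [].
Qed.

Lemma expo (p : nat) (gT : finGroupType) (P : {group gT}) u :
  prime p -> p.-group P -> u \in P -> u \notin 'Z(P) ->
  exists z c n, [/\ #|'Z(P)| = p ^ z, #|'C_P[u]| = p ^ c, #|P| = p ^ n,
                    z < c & c < n]%N.
Proof.
move=> pp pP uP uZ.
have ZC : 'Z(P) \proper 'C_P[u].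
  rewrite properEneq; apply/andP; split.
    apply/eqP => e; move/negP: uZ; apply; rewrite e in_setI uP.
    by apply/cent1P.
  apply/subsetP => w /centerP [wP cw]; rewrite in_setI wP; apply/cent1P.
  exact: cw u uP.
have CP : 'C_P[u] \proper P.
  rewrite properEneq subsetIl andbT; apply/eqP => e; move/negP: uZ; apply.
  apply/centerP; split => // w wP; rewrite -e in wP.
  by move: wP; rewrite in_setI => /andP [_ /cent1P c]; apply: commute_sym.
have pZ : p.-group 'Z(P) by apply: pgroupS pP; apply: center_sub.
have pC : p.-group 'C_P[u] by apply: pgroupS pP; apply: subsetIl.
exists (logn p #|'Z(P)|), (logn p #|'C_P[u]|), (logn p #|P|).
rewrite -(ltn_exp2l _ _ (prime_gt1 pp)) -(ltn_exp2l _ (logn p #|P|) (prime_gt1 pp)).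
rewrite -!card_pgroup //; split => //; exact: proper_card.
Qed.
End Helpers.

Theorem mainTheorem5 (p : nat) (gT hT : finGroupType)
    (G P A : {group gT}) (H P1 B : {group hT}) :
  prime p ->
  P \x A = G -> P1 \x B = H ->
  p.-group P -> ~~ abelian P -> abelian A -> A :!=: 1 -> coprime #|A| p ->
  p.-group P1 -> ~~ abelian P1 -> abelian B -> B :!=: 1 -> coprime #|B| p ->
  nc_irregular G -> nc_irregular H -> nc_isomorphic G H ->
  [/\ #|A| = #|B|, #|P| = #|P1| & #|G| = #|H|].
Proof.
move=> pp defG defH pP _ abA _ cA pP1 _ abB _ cB [x [y [xV _ _]]] _ [f [inj im adj]].
have [ecard edeg] := iso_facts inj im adj.
have fxV : f x \in nc_vert H by rewrite -im imset_f.
have ed := edeg x xV.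
rewrite (deg_card xV) (deg_card fxV) in ed; rewrite !vert_card in ecard.
have [u [uP uZ eC]] := cent_struct defG abA xV.
have [v [vP vZ eC']] := cent_struct defH abB fxV.
rewrite eC eC' in ed; rewrite (center_card defG abA) (center_card defH abB) in ecard.
rewrite -(dprod_card defG) -(dprod_card defH) in ed ecard *.
have [z [c [n [ez ec en zc cn]]]] := expo pp pP uP uZ.
have [z' [c' [n' [ez' ec' en' zc' cn']]]] := expo pp pP1 vP vZ.
rewrite ez ec en ez' ec' en' in ed ecard *.
have a0 : (0 < #|A|)%N by [].
have b0 : (0 < #|B|)%N by [].
move: a0 b0 ed ecard cA cB; set a := #|A|; set b := #|B| => a0 b0 ed ecard cA cB.
rewrite -!mulnBl in ed ecard.
have h1 : (p ^ z < p ^ c)%N by rewrite ltn_exp2l ?prime_gt1.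
have h2 : (p ^ c < p ^ n)%N by rewrite ltn_exp2l ?prime_gt1.
have h1' : (p ^ z' < p ^ c')%N by rewrite ltn_exp2l ?prime_gt1.
have h2' : (p ^ c' < p ^ n')%N by rewrite ltn_exp2l ?prime_gt1.
have e2 : (a * (p ^ n - p ^ c) = b * (p ^ n' - p ^ c'))%N by rewrite mulnC -ed mulnC.
have e1 : (a * (p ^ c - p ^ z) = b * (p ^ c' - p ^ z'))%N.
  move: ed ecard e2 h1 h2 h1' h2'.
  generalize (p ^ z)%N (p ^ c)%N (p ^ n)%N (p ^ z')%N (p ^ c')%N (p ^ n')%N => Z C N Z' C' N'.
  move=> ed ecard e2 h1 h2 h1' h2'.
  nia.
have [eab epn] := arith pp cA cB a0 b0 zc cn zc' cn' e1 e2.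
by rewrite -epn -eab mulnC.
Qed.
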